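(* Let $W \in \mathbb{R}^{m \times D}$, let $k$ be a nonnegative integer with $k < D$ and $k < m$, and let $\mathbf{1} \in \mathbb{R}^D$ be the all-ones vector. Consider the function $$f(w_c, W_s, \Gamma) = \left\| W - w_c \mathbf{1}^{\top} - W_s \Gamma^{\top} \right\|_F^2$$ over all $w_c \in \mathbb{R}^m$, $W_s \in \mathbb{R}^{m \times k}$, $\Gamma \in \mathbb{R}^{D \times k}$ subject to the constraint $w_c \perp \mathrm{Span}(W_s)$ (the column span of $W_s$). Define: (1) $w_c := \frac{1}{D} W \mathbf{1}$; (2) $W_s := U_k \Sigma_k$ and $\Gamma := V_k$, where $U_k \Sigma_k V_k^{\top}$ is a top-$k$ truncated singular value decomposition of $W - w_c \mathbf{1}^{\top}$; (3) $M := w_c \mathbf{1}^{\top} + W_s \Gamma^{\top} \in \mathbb{R}^{m \times D}$, $v := (M^{+})^{\top} \mathbf{1} \in \mathbb{R}^m$ (where $M^+$ is the Moore–Penrose pseudoinverse of $M$), and $w_c^{\mathrm{new}} := v / \|v\|^2$; (4) $W_s^{\mathrm{new}} \in \mathbb{R}^{m\times k}$, $\Gamma^{\mathrm{new}} \in \mathbb{R}^{D \times k}$ any factorization with $W_s^{\mathrm{new}} (\Gamma^{\mathrm{new}})^{\top} = M - w_c^{\mathrm{new}} \mathbf{1}^{\top}$. Assume $M$ has rank $k+1$ (so that $v \neq 0$ and step (3) is well defined). Then $w_c^{\mathrm{new}} \perp \mathrm{Span}(W_s^{\mathrm{new}})$, and $(w_c^{\mathrm{new}}, W_s^{\mathrm{new}},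 \Gamma^{\mathrm{new}})$ is a minimizer of $f$ subject to the constraint $w_c \perp \mathrm{Span}(W_s)$; that is, the minimum of $f$ over the constraint set is attained and equals $\|W - M\|_F^2$.
   Context: $\|\cdot\|_F$ denotes the Frobenius norm. A top-$k$ truncated SVD of a matrix $A$ with SVD $A = U\Sigma V^{\top}$ (singular values in non-increasing order) is $U_k\Sigma_k V_k^{\top}$, where $U_k, V_k$ consist of the first $k$ columns of $U, V$ and $\Sigma_k$ is the leading $k\times k$ block of $\Sigma$. *)

(* Defs.v *)
(* Real numbers are modelled by an arbitrary real closed field. *)
From HB Require Import structures.
From mathcomp Require Import all_boot all_order all_algebra.
Set Implicit Arguments. Unset Strict Implicit. Unset Printing Implicit Defensive.
Import Order.TTheory GRing.Theory Num.Theory.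
Local Open Scope ring_scope.

Definition ones (R : rcfType) (n : nat) : 'cV[R]_n := const_mx 1.

Definition frob2 (R : rcfType) (m n : nat) (A : 'M[R]_(m, n)) : R :=
  \sum_(i < m) \sum_(j < n) A i j ^+ 2.

Definition sqnorm (R : rcfType) (m : nat) (v : 'cV[R]_m) : R :=
  \sum_(i < m) v i 0 ^+ 2.

Definition is_svd (R : rcfType) (m n : nat) (A : 'M[R]_(m, n))
  (U : 'M[R]_m) (S : 'M[R]_(m, n)) (V : 'M[R]_n) : Prop :=
  [/\ [/\ U *m U^T = 1%:M, U^T *m U = 1%:M, V *m V^T = 1%:M & V^T *m V = 1%:M],
      (forall (i : 'I_m) (j : 'I_n), val i <> val j -> S i j = 0),
      (forall (i : 'I_m) (j : 'I_n), val i = val j -> 0 <= S i j),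
      (forall (i i' : 'I_m) (j j' : 'I_n), val i = val j -> val i' = val j' ->
          (val i <= val i')%N -> S i' j' <= S i j)
    & A = U *m S *m V^T].

Definition truncated_svd (R : rcfType) (m n k : nat) (A : 'M[R]_(m, n))
  (Uk : 'M[R]_(m, k)) (Sk : 'M[R]_k) (Vk : 'M[R]_(n, k)) : Prop :=
  exists (U : 'M[R]_m) (S : 'M[R]_(m, n)) (V : 'M[R]_n),
    [/\ is_svd A U S V,
        (forall (i : 'I_m) (j : 'I_k) (j' : 'I_m), val j = val j' -> Uk i j = U i j'),
        (forall (i : 'I_n) (j : 'I_k) (j' : 'I_n), val j = val j' -> Vk i j = V i j')
      & (forall (a b : 'I_k) (a' : 'I_m) (b' : 'I_n), val a = val a' -> val b = val b' ->
           Sk a b = S a' b')].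

Definition is_pinv (R : rcfType) (m n : nat) (M : 'M[R]_(m, n)) (P : 'M[R]_(n, m)) : Prop :=
  [/\ M *m P *m M = M, P *m M *m P = P, (M *m P)^T = M *m P & (P *m M)^T = P *m M].

Definition fobj (R : rcfType) (m D k : nat) (W : 'M[R]_(m, D)) (wc : 'cV[R]_m)
  (Ws : 'M[R]_(m, k)) (G : 'M[R]_(D, k)) : R :=
  frob2 (W - wc *m (ones R D)^T - Ws *m G^T).

Definition orth_span (R : rcfType) (m k : nat) (wc : 'cV[R]_m) (Ws : 'M[R]_(m, k)) : Prop :=
  wc^T *m Ws = 0.

(* Main.v *)
Require Import Defs.
From HB Require Import structures.
From mathcomp Require Import all_boot all_order all_algebra.
From mathcomp Require Import ring lra zify.
Set Implicit Arguments. Unset Strict Implicit. Unset Printing Implicit Defensive.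
Import Order.TTheory GRing.Theory Num.Theory.
Local Open Scope ring_scope.

Section Aux.
Variable R : rcfType.

Lemma frob2E m n (A : 'M[R]_(m, n)) : frob2 A = \tr (A *m A^T).
Proof.
rewrite /frob2 /mxtrace; apply: eq_bigr => i _; rewrite mxE.
by apply: eq_bigr => j _; rewrite mxE expr2.
Qed.

Lemma frob2_ge0 m n (A : 'M[R]_(m, n)) : 0 <= frob2 A.
Proof. by rewrite /frob2; apply: sumr_ge0 => i _; apply: sumr_ge0 => j _; apply: sqr_ge0. Qed.

Lemma trC m n (A : 'M[R]_(m, n)) (B : 'M[R]_(n, m)) : \tr (A *m B) = \tr (B *m A).
Proof. exact: mxtrace_mulC. Qed.

Lemma frob2_orth m n p q (U : 'M[R]_(p, m)) (A : 'M[R]_(m, n)) (V : 'M[R]_(q, n)) :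
  U^T *m U = 1%:M -> V^T *m V = 1%:M -> frob2 (U *m A *m V^T) = frob2 A.
Proof.
move=> hU hV; rewrite !frob2E !trmx_mul !trmxK.
rewrite -!mulmxA (mulmxA V^T) hV mul1mx trC -!mulmxA hU mulmx1.
by [].
Qed.

Lemma frob2_pyth m n (X Y : 'M[R]_(m, n)) : X *m Y^T = 0 -> frob2 (X + Y) = frob2 X + frob2 Y.
Proof.
move=> h; rewrite !frob2E linearD /= mulmxDl !mulmxDr h.
have h2 : Y *m X^T = 0 by rewrite -[Y]trmxK -trmx_mul h trmx0.
by rewrite h2 !mxtraceD mxtrace0 add0r addr0.
Qed.

Lemma cV_sq n (z : 'cV[R]_n) : z^T *m z = (\sum_i z i 0 ^+ 2)%:M.
Proof.
rewrite [LHS]mx11_scalar mxE; congr (_%:M); apply: eq_bigr => i _.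
by rewrite mxE expr2.
Qed.

Lemma normalize n (z : 'cV[R]_n) : z != 0 ->
  exists2 c : R, 0 < c & ((c^-1 *: z)^T *m (c^-1 *: z) = 1%:M /\ z^T *m z = (c ^+ 2)%:M).
Proof.
move=> hz; set s := \sum_i z i 0 ^+ 2.
have s0 : 0 <= s by apply: sumr_ge0 => i _; apply: sqr_ge0.
have sp : 0 < s.
  rewrite lt0r s0 andbT; apply/negP => /eqP hs.
  have h := psumr_eq0P (fun i _ => sqr_ge0 (z i 0)) hs.
  move/negP: hz; apply; apply/eqP/matrixP => i j.
  rewrite (ord1 j) mxE; have := h i isT; by move/eqP; rewrite sqrf_eq0 => /eqP.
exists (Num.sqrt s); first by rewrite sqrtr_gt0.
have hc : Num.sqrt s ^+ 2 = s by rewrite sqr_sqrtr.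
split; last by rewrite cV_sq hc.
have -> : ((Num.sqrt s)^-1 *: z)^T = (Num.sqrt s)^-1 *: z^T.
  by apply/matrixP => i j; rewrite !mxE.
rewrite -scalemxAl -scalemxAr scalerA cV_sq -/s.
rewrite scale_scalar_mx. congr (_%:M).
have hc0 : Num.sqrt s != 0 by rewrite gt_eqF // sqrtr_gt0.
move: hc hc0; move: (Num.sqrt s) => c hc hc0; rewrite -hc; field; done.
Qed.


Lemma orth_vec n k (Q1 : 'M[R]_(n, k)) : (k < n)%N ->
  exists z : 'cV[R]_n, z != 0 /\ Q1^T *m z = 0.
Proof.
move=> hkn; set K := kermx Q1.
have hK : K != 0.
  rewrite -mxrank_eq0 mxrank_ker subn_eq0 -ltnNge.
  exact: leq_ltn_trans (rank_leq_col Q1) hkn.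
have [i hi] : exists i, row i K != 0.
  case: (pickP (fun i => row i K != 0)) => [i hi|h]; first by exists i.
  move/negP: hK; case; apply/eqP/row_matrixP => i.
  by rewrite row0; move: (h i) => /negbFE/eqP.
exists (row i K)^T; split.
  by apply: contra hi => /eqP h; rewrite -[row i K]trmxK h trmx0.
rewrite -[Q1^T *m _]trmxK trmx_mul !trmxK.
by have /sub_kermxP -> := row_sub i K; rewrite trmx0.
Qed.

Lemma unit_orth n k (Q1 : 'M[R]_(n, k)) (y : 'cV[R]_n) : (k < n)%N ->
  Q1^T *m Q1 = 1%:M ->
  exists q : 'cV[R]_n, [/\ Q1^T *m q = 0, q^T *m q = 1%:M &
     y = Q1 *m (Q1^T *m y) + q *m (q^T *m y)].
Proof.
move=> hkn hQ.
set r := y - Q1 *m (Q1^T *m y).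
have hr : Q1^T *m r = 0 by rewrite mulmxBr !mulmxA hQ mul1mx subrr.
have hqT : forall q : 'cV[R]_n, Q1^T *m q = 0 -> q^T *m Q1 = 0.
  by move=> q hq; rewrite -[q^T *m Q1]trmxK trmx_mul trmxK hq trmx0.
have hy : y = Q1 *m (Q1^T *m y) + r by rewrite /r addrC subrK.
have [rz|rnz] := eqVneq r 0.
  have [z [hz hQz]] := orth_vec Q1 hkn.
  have [c cp [h1 h2]] := normalize hz.
  exists (c^-1 *: z); split => //.
    by rewrite -scalemxAr hQz scaler0.
  have -> : (c^-1 *: z)^T *m y = 0.
    rewrite hy rz addr0 !mulmxA hqT ?mul0mx //.
    by rewrite -scalemxAr hQz scaler0.
  by rewrite mulmx0 addr0 {1}hy rz addr0.
have [c cp [h1 h2]] := normalize rnz.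
exists (c^-1 *: r); split => //.
  by rewrite -scalemxAr hr scaler0.
have -> : (c^-1 *: r)^T *m y = (c^-1 *: r)^T *m r.
  by rewrite {1}hy mulmxDr !mulmxA hqT ?mul0mx ?add0r // -scalemxAr hr scaler0.
have -> : (c^-1 *: r)^T = c^-1 *: r^T by apply/matrixP => i j; rewrite !mxE.
rewrite -scalemxAl h2 -scalemxAl -scalemxAr mul_mx_scalar !scalerA.
have c0 : c != 0 by rewrite gt_eqF.
have -> : c^-1 * (c^-1 * c ^+ 2) = 1 by field.
by rewrite scale1r {1}hy.
Qed.

Lemma QR_step n k : (k < n)%N ->
  (forall Y : 'M[R]_(n, k),
    exists Q : 'M[R]_(n, k), exists T : 'M[R]_k, Q^T *m Q = 1%:M /\ Y = Q *m T) ->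
  forall Y : 'M[R]_(n, 1 + k),
  exists Q : 'M[R]_(n, 1 + k), exists T : 'M[R]_(1 + k), Q^T *m Q = 1%:M /\ Y = Q *m T.
Proof.
move=> hkn IH Y.
have [Q1 [T1 [hQ1 hY1]]] := IH (rsubmx Y).
have [q [hq1 hq2 hq3]] := unit_orth (lsubmx Y) hkn hQ1.
have hqT : q^T *m Q1 = 0.
  by rewrite -[q^T *m Q1]trmxK trmx_mul trmxK hq1 trmx0.
exists (row_mx q Q1).
exists (block_mx (q^T *m lsubmx Y) 0 (Q1^T *m lsubmx Y) T1).
split.
  rewrite tr_row_mx mul_col_row hq1 hq2 hQ1 hqT.
  by rewrite (scalar_mx_block 1 k).
rewrite mul_row_block mulmx0 add0r addrC -hq3 -hY1.
by rewrite hsubmxK.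
Qed.

Lemma QR n k : (k <= n)%N -> forall Y : 'M[R]_(n, k),
  exists Q : 'M[R]_(n, k), exists T : 'M[R]_k, Q^T *m Q = 1%:M /\ Y = Q *m T.
Proof.
elim: k => [|k IH] hk Y.
  exists 0, 0; split; first by apply/matrixP => [[]].
  by apply/matrixP => i [].
exact: (QR_step hk (IH (ltnW hk)) Y).
Qed.

Lemma tr_pid D k : (k <= D)%N -> \tr (pid_mx k : 'M[R]_D) = k%:R.
Proof.
move=> hk.
have -> : (pid_mx k : 'M[R]_D) = (pid_mx k : 'M[R]_(D, k)) *m (pid_mx k : 'M[R]_(k, D)).
  by rewrite mul_pid_mx !minnn.
by rewrite trC mul_pid_mx minnn (minn_idPr hk) pid_mx_1 mxtrace1.
Qed.

Lemma kyfan D k (hk : (k < D)%N) (lam c : 'I_D -> R) :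
  (forall i j : 'I_D, (i <= j)%N -> lam j <= lam i) -> (forall i, 0 <= lam i) ->
  (forall i, 0 <= c i <= 1) -> \sum_i c i = k%:R ->
  \sum_i c i * lam i <= \sum_i (pid_mx k : 'M[R]_D) i i * lam i.
Proof.
move=> hmono hpos hc hsum.
set d := fun i : 'I_D => (pid_mx k : 'M[R]_D) i i.
have hd : \sum_i d i = k%:R by rewrite -(tr_pid (ltnW hk)).
pose p := Ordinal hk; set L := lam p.
have H : \sum_i (c i * lam i - d i * lam i) <= \sum_i L * (c i - d i).
  apply: ler_sum => i _; rewrite /d mxE eqxx /=.
  have [hi|hi] := ltnP i k.
    have hl : L <= lam i by apply: hmono; rewrite /= ltnW.
    have := hc i; case/andP => c0 c1; rewrite /=; nra.
  have hl : lam i <= L by apply: hmono.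
  have := hc i; case/andP => c0 c1; rewrite (_ : false%:R = 0) // mul0r !subr0; nra.
rewrite sumrB -mulr_sumr sumrB hsum hd subrr mulr0 in H.
by rewrite -subr_ge0 -oppr_le0 opprB.
Qed.

End Aux.

Section Aux2.
Variable R : rcfType.

Lemma frob2_sym m n (S : 'M[R]_(m, n)) (B : 'M[R]_n) :
  B^T = B -> B *m B = B -> frob2 (S *m B) = \tr (B *m (S^T *m S)).
Proof.
move=> hT hI; rewrite frob2E trmx_mul hT !mulmxA -(mulmxA S) hI.
by rewrite trC mulmxA -[in RHS]mulmxA [RHS]trC.
Qed.

Lemma tr_diag_mul n (B L : 'M[R]_n) : (forall i j, i != j -> L i j = 0) ->
  \tr (B *m L) = \sum_i B i i * L i i.
Proof.
move=> hL; rewrite /mxtrace; apply: eq_bigr => i _; rewrite mxE.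
rewrite (bigD1 i) //= big1 ?addr0 // => j hj.
by rewrite hL ?mulr0 // eq_sym.
Qed.

Lemma sym_idem_diag n (G : 'M[R]_n) : G^T = G -> G *m G = G ->
  forall i, 0 <= G i i <= 1.
Proof.
move=> hT hI i.
have e : G i i = \sum_j G i j ^+ 2.
  rewrite -{1}hI mxE; apply: eq_bigr => j _.
  by rewrite -{2}hT mxE expr2.
have h0 : 0 <= G i i by rewrite e; apply: sumr_ge0 => j _; apply: sqr_ge0.
have h1 : G i i ^+ 2 <= G i i.
  rewrite [X in _ <= X]e (bigD1 i) //= lerDl.
  by apply: sumr_ge0 => j _; apply: sqr_ge0.
rewrite h0 /=; nra.
Qed.


Lemma sum1B n (B L : 'M[R]_n) :
  \sum_i (1%:M - B) i i * L i i = \sum_i L i i - \sum_i B i i * L i i.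
Proof.
rewrite -sumrB; apply: eq_bigr => i _.
by rewrite !mxE eqxx mulr1n mulrBl mul1r.
Qed.

Lemma EY m D k (hk : (k < D)%N) (A : 'M[R]_(m, D)) U S V :
  is_svd A U S V -> forall (X : 'M[R]_(m, k)) (Y : 'M[R]_(D, k)),
  frob2 (U *m (S *m (1%:M - pid_mx k)) *m V^T) <= frob2 (A - X *m Y^T).
Proof.
case=> [[hUU hUtU hVV hVtV] hdiag hnn hsort hA] X Y.
have [Q [T [hQ hY]]] := QR (ltnW hk) Y.
set Z := V^T *m Q.
have hZ : Z^T *m Z = 1%:M.
  by rewrite /Z trmx_mul trmxK mulmxA -(mulmxA Q^T) hVV mulmx1.
have step1 : frob2 (A - A *m Q *m Q^T) <= frob2 (A - X *m Y^T).
  have e : A - X *m Y^T = (A - A *m Q *m Q^T) + (A *m Q - X *m T^T) *m Q^T.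
    by rewrite hY trmx_mul mulmxBl -!mulmxA addrA subrK.
  rewrite e (frob2_pyth (X := A - A *m Q *m Q^T)) ?lerDl ?frob2_ge0 //.
  rewrite trmx_mul trmxK mulmxA mulmxBl -!mulmxA hQ mulmx1 subrr mul0mx.
  by [].
apply: le_trans step1.
have e2 : A - A *m Q *m Q^T = U *m (S *m (1%:M - Z *m Z^T)) *m V^T.
  rewrite hA /Z trmx_mul trmxK mulmxBr mulmx1 mulmxBr mulmxBl.
  congr (_ - _); rewrite !mulmxA -(mulmxA _ V) hVV mulmx1.
  by [].
rewrite e2 !frob2_orth //.
set Lm := S^T *m S.
have hL : forall i j, i != j -> Lm i j = 0.
  move=> i j hij; rewrite mxE big1 // => l _; rewrite mxE.
  have [e|ne] := eqVneq (val l) (val i).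
    rewrite [S l j]hdiag ?mulr0 //.
    by move=> h; move/negP: hij; apply; apply/eqP/val_inj; rewrite /= -e h.
  by rewrite hdiag ?mul0r //; move=> h; move/negP: ne; rewrite h.
have symB : forall B : 'M[R]_D, B^T = B -> B *m B = B ->
    (1%:M - B)^T = 1%:M - B /\ (1%:M - B) *m (1%:M - B) = 1%:M - B.
  move=> B hT hI; split; first by rewrite linearB /= trmx1 hT.
  by rewrite mulmxBl mul1mx mulmxBr mulmx1 hI subrr subr0.
have hGT : (Z *m Z^T)^T = Z *m Z^T by rewrite trmx_mul trmxK.
have hGI : (Z *m Z^T) *m (Z *m Z^T) = Z *m Z^T.
  by rewrite mulmxA -(mulmxA Z) hZ mulmx1.
have hPT : (pid_mx k : 'M[R]_D)^T = pid_mx k by rewrite tr_pid_mx.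
have hPI : (pid_mx k : 'M[R]_D) *m (pid_mx k : 'M[R]_D) = (pid_mx k : 'M[R]_D).
  by rewrite pid_mx_id // ltnW.
have [h1 h2] := symB _ hGT hGI.
have [h3 h4] := symB _ hPT hPI.
rewrite !frob2_sym // !tr_diag_mul //.
rewrite !sum1B lerD2l lerN2.
apply: (kyfan hk (lam := fun i => Lm i i) (c := fun i => (Z *m Z^T) i i)).
- have Le : forall i, Lm i i = \sum_l S l i ^+ 2.
    by move=> i; rewrite mxE; apply: eq_bigr => l _; rewrite mxE expr2.
  have lam_at : forall (i : 'I_D) (l0 : 'I_m), val l0 = val i -> Lm i i = S l0 i ^+ 2.
    move=> i l0 hl0; rewrite Le (bigD1 l0) //= big1 ?addr0 // => l hl.
    rewrite hdiag ?expr0n //= => e; move/negP: hl; apply; apply/eqP/val_inj.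
    by rewrite /= e hl0.
  have lam_zero : forall i : 'I_D, (m <= i)%N -> Lm i i = 0.
    move=> i hi; rewrite Le big1 // => l _; rewrite hdiag ?expr0n //= => e.
    by move: (ltn_ord l); rewrite e ltnNge hi.
  move=> i j hij; have [hj|hj] := ltnP j m.
    have hi : (i < m)%N by exact: leq_ltn_trans hij hj.
    rewrite (lam_at j (Ordinal hj)) // (lam_at i (Ordinal hi)) //.
    have g1 := hsort (Ordinal hi) (Ordinal hj) i j erefl erefl hij.
    have g2 := hnn (Ordinal hj) j erefl.
    by rewrite !expr2; nra.
  rewrite lam_zero // Le; apply: sumr_ge0 => l _; apply: sqr_ge0.
- move=> i; rewrite mxE; apply: sumr_ge0 => l _; rewrite mxE -expr2; apply: sqr_ge0.
- exact: sym_idem_diag.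
- rewrite -/(mxtrace (Z *m Z^T)) trC hZ mxtrace1 //.
Qed.


End Aux2.

Section Aux3.
Variable R : rcfType.

Lemma mul_pid_col n k (h : (k <= n)%N) p (A : 'M[R]_(p, n)) i (j : 'I_k) :
  (A *m (pid_mx k : 'M[R]_(n, k))) i j = A i (widen_ord h j).
Proof.
rewrite mxE (bigD1 (widen_ord h j)) //= big1 ?addr0.
  by rewrite mxE /= eqxx ltn_ord mulr1.
move=> l hl; rewrite mxE.
have -> : (val l == val j) = false.
  by apply/negP => /eqP e; move/negP: hl; apply; apply/eqP/val_inj.
by rewrite mulr0.
Qed.

Lemma pid_diag m D k (S : 'M[R]_(m, D)) :
  (forall (i : 'I_m) (j : 'I_D), val i <> val j -> S i j = 0) ->
  (pid_mx k : 'M[R]_m) *m S = S *m (pid_mx k : 'M[R]_D).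
Proof.
move=> hd; apply/matrixP => i j.
have e1 : ((pid_mx k : 'M[R]_m) *m S) i j = ((i < k)%N)%:R * S i j.
  rewrite mxE (bigD1 i) //= big1 ?addr0; first by rewrite mxE eqxx.
  move=> l hl; rewrite mxE.
  have -> : (val i == val l) = false.
    by apply/negP => /eqP e; move/negP: hl; apply; apply/eqP/val_inj.
  by rewrite mul0r.
have e2 : (S *m (pid_mx k : 'M[R]_D)) i j = S i j * ((j < k)%N)%:R.
  rewrite mxE (bigD1 j) //= big1 ?addr0; first by rewrite mxE eqxx.
  move=> l hl; rewrite mxE.
  have -> : (val l == val j) = false.
    by apply/negP => /eqP e; move/negP: hl; apply; apply/eqP/val_inj.
  by rewrite mulr0.
rewrite e1 e2; have [e|ne] := eqVneq (val i) (val j).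
  by rewrite e mulrC.
by rewrite hd ?mulr0 ?mul0r //; apply/eqP.
Qed.

Lemma svd_trunc m D k (hkm : (k < m)%N) (hkD : (k < D)%N) (A : 'M[R]_(m, D))
  (Uk : 'M[R]_(m, k)) (Sk : 'M[R]_k) (Vk : 'M[R]_(D, k)) : truncated_svd A Uk Sk Vk ->
  exists U S V, is_svd A U S V /\
    Uk *m Sk *m Vk^T = U *m (S *m (pid_mx k : 'M[R]_D)) *m V^T.
Proof.
case=> U [S [V [hs hU hV hS]]]; exists U, S, V; split => //.
have hkm' := ltnW hkm; have hkD' := ltnW hkD.
have eU : Uk = U *m (pid_mx k : 'M[R]_(m, k)).
  by apply/matrixP => i j; rewrite mul_pid_col; apply: hU.
have eV : Vk = V *m (pid_mx k : 'M[R]_(D, k)).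
  by apply/matrixP => i j; rewrite mul_pid_col; apply: hV.
have eS : Sk = (pid_mx k : 'M[R]_(m, k))^T *m S *m (pid_mx k : 'M[R]_(D, k)).
  apply/matrixP => a b; rewrite mul_pid_col.
  rewrite -[_ *m S]trmxK trmx_mul trmxK mxE mul_pid_col mxE.
  by apply: hS.
case: hs => _ hd _ _ _.
rewrite eU eV eS trmx_mul !tr_pid_mx.
have P1 : (pid_mx k : 'M[R]_(m, k)) *m (pid_mx k : 'M[R]_(k, m)) = pid_mx k.
  by rewrite mul_pid_mx !minnn.
have P2 : (pid_mx k : 'M[R]_(D, k)) *m (pid_mx k : 'M[R]_(k, D)) = pid_mx k.
  by rewrite mul_pid_mx !minnn.
have P3 : (pid_mx k : 'M[R]_D) *m (pid_mx k : 'M[R]_D) = pid_mx k.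
  by rewrite pid_mx_id.
rewrite !mulmxA -(mulmxA U) P1 -(mulmxA _ _ (pid_mx k : 'M[R]_(k, D))) P2.
rewrite -(mulmxA U) pid_diag // !mulmxA -(mulmxA (U *m S)) P3.
by [].
Qed.

End Aux3.

Theorem theorem1 (R : rcfType) (m D k : nat) (W : 'M[R]_(m, D))
  (hkD : (k < D)%N) (hkm : (k < m)%N)
  (Uk : 'M[R]_(m, k)) (Sk : 'M[R]_k) (Vk : 'M[R]_(D, k))
  (P : 'M[R]_(D, m)) (Wsn : 'M[R]_(m, k)) (Gn : 'M[R]_(D, k)) :
  let wc : 'cV[R]_m := (D%:R)^-1 *: (W *m ones R D) in
  truncated_svd (W - wc *m (ones R D)^T) Uk Sk Vk ->
  let Ws := Uk *m Sk in
  let G := Vk in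
  let M := wc *m (ones R D)^T + Ws *m G^T in
  \rank M = k.+1 ->
  is_pinv M P ->
  let v : 'cV[R]_m := P^T *m ones R D in
  let wn := (sqnorm v)^-1 *: v in
  Wsn *m Gn^T = M - wn *m (ones R D)^T ->
  orth_span wn Wsn /\
  (forall (wc' : 'cV[R]_m) (Ws' : 'M[R]_(m, k)) (G' : 'M[R]_(D, k)),
      orth_span wc' Ws' -> frob2 (W - M) <= fobj W wc' Ws' G') /\
  fobj W wn Wsn Gn = frob2 (W - M).
Proof.
move=> wc hsvd Ws G M hrank hpinv v wn hfact.
have hD : (0 < D)%N by exact: leq_ltn_trans (leq0n k) hkD.
have hD0 : (D%:R : R) != 0 by rewrite pnatr_eq0 -lt0n.
have [U [S [V [hs htr]]]] := svd_trunc hkm hkD hsvd.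
have hWM : W - M = U *m (S *m (1%:M - pid_mx k)) *m V^T.
  case: (hs) => _ _ _ _ hC.
  rewrite /M /Ws /G mulmxA htr opprD addrA hC.
  by rewrite mulmxBr mulmx1 mulmxBl !mulmxA.
have one1 : (ones R D)^T *m (ones R D) = (D%:R)%:M.
  rewrite [LHS]mx11_scalar mxE; congr (_%:M).
  rewrite (eq_bigr (fun _ => 1)); last by move=> i _; rewrite !mxE mulr1.
  by rewrite sumr_const card_ord.
split; last split.
- rewrite /orth_span.
  have hsub : ((ones R D)^T <= M)%MS.
    pose B : 'M[R]_(1 + k, D) := col_mx (ones R D)^T G^T.
    have hMB : M = row_mx wc Ws *m B by rewrite mul_row_col.
    have sMB : (M <= B)%MS by rewrite hMB submxMl.
    have rB : (\rank B <= k.+1)%N := rank_leq_row B.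
    have eMB : (M == B)%MS.
      rewrite -(mxrank_leqif_eq sMB).2 hrank eqn_leq rB andbT.
      by rewrite -hrank (mxrank_leqif_eq sMB).1.
    have sBM : (B <= M)%MS by case/andP: eMB.
    have s1B : ((ones R D)^T <= B)%MS.
      apply/submxP; exists (row_mx 1%:M 0 : 'M[R]_(1, 1 + k)).
      by rewrite mul_row_col mul1mx mul0mx addr0.
    exact: submx_trans s1B sBM.
  case/submxP: hsub => u hu.
  case: hpinv => hMPM _ _ _.
  have hvM : v^T *m M = (ones R D)^T.
    by rewrite /v trmx_mul trmxK {1}hu -!mulmxA (mulmxA M) hMPM.
  set s := sqnorm v.
  have hvv : v^T *m v = s%:M by rewrite cV_sq.
  have hs0 : s != 0.
    apply/negP => /eqP hs0.
    have h := psumr_eq0P (fun i _ => sqr_ge0 (v i 0)) hs0.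
    have v0 : v = 0.
      apply/matrixP => i j; rewrite (ord1 j) [RHS]mxE.
      by have := h i isT; move/eqP; rewrite sqrf_eq0 => /eqP.
    move: hvM; rewrite v0 trmx0 mul0mx => /matrixP /(_ 0 (Ordinal hD)).
    by rewrite !mxE => /eqP; rewrite eq_sym oner_eq0.
  have hwnT : wn^T = s^-1 *: v^T by apply/matrixP => i j; rewrite !mxE.
  have hwM : wn^T *m (M - wn *m (ones R D)^T) = 0.
    rewrite mulmxBr hwnT -!scalemxAl hvM -/s -scalemxAr mulmxA hvv mul_scalar_mx !scalerA.

    have -> : s^-1 * (s^-1 * s) = s^-1 by field.
    by rewrite subrr.
  have hzero : (wn^T *m Wsn) *m Gn^T = 0 by rewrite -mulmxA hfact.
  have hfree : row_free Gn^T.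
    have r1 : (k.+1 <= \rank (Wsn *m Gn^T) + 1)%N.
      rewrite -hrank.
      have -> : M = Wsn *m Gn^T + wn *m (ones R D)^T by rewrite hfact subrK.
      apply: leq_trans (mxrank_add _ _) _; rewrite leq_add2l.
      exact: leq_trans (mxrankM_maxr _ _) (rank_leq_row _).
    have r2 := mxrankM_maxr Wsn Gn^T.
    have r3 := rank_leq_row Gn^T.
    rewrite /row_free eqn_leq r3 /=; rewrite addn1 ltnS in r1; exact: leq_trans r1 r2.
  by apply/eqP; rewrite -(mulmx_free_eq0 _ hfree) hzero.
- move=> wc' Ws' G' _; rewrite /fobj hWM.
  set E := W - wc' *m (ones R D)^T - Ws' *m G'^T.
  set J : 'M[R]_D := (D%:R)^-1 *: ((ones R D) *m (ones R D)^T).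
  set K : 'M[R]_D := 1%:M - J.
  have hJT : J^T = J by rewrite /J linearZ /= trmx_mul trmxK.
  have hJJ : J *m J = J.
    rewrite /J -scalemxAl -scalemxAr scalerA mulmxA -(mulmxA (ones R D)) one1.
    by rewrite mul_mx_scalar -scalemxAl scalerA; congr (_ *: _); field.
  have hKJ : K *m J = 0 by rewrite /K mulmxBl mul1mx hJJ subrr.
  have hKT : K^T = K by rewrite /K linearB /= trmx1 hJT.
  have h1 : frob2 (E *m K) <= frob2 E.
    have e : E = E *m K + E *m J by rewrite /K mulmxBr mulmx1 subrK.
    rewrite [X in _ <= frob2 X]e frob2_pyth ?lerDl ?frob2_ge0 //.
    by rewrite trmx_mul -!mulmxA hJT (mulmxA K) hKJ mul0mx mulmx0.
  apply: le_trans h1.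
  have hoK : (ones R D)^T *m K = 0.
    rewrite /K /J mulmxBr mulmx1 -scalemxAr mulmxA one1 mul_scalar_mx scalerA.
    by rewrite mulVf // scale1r subrr.
  have e1 : W *m K = W - wc *m (ones R D)^T.
    rewrite /K mulmxBr mulmx1 /J -scalemxAr mulmxA.
    by rewrite /wc scalemxAl.
  have e2 : (wc' *m (ones R D)^T) *m K = 0 by rewrite -mulmxA hoK mulmx0.
  have e3 : (Ws' *m G'^T) *m K = Ws' *m (K *m G')^T by rewrite trmx_mul hKT mulmxA.
  clearbody K.
  have -> : E *m K = (W - wc *m (ones R D)^T) - Ws' *m (K *m G')^T.
    by rewrite /E !mulmxBl e1 e2 e3 subr0.
  have := EY hkD hs Ws' (K *m G').
  by [].
- rewrite /fobj hfact opprB addrA subrK //.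
Qed.
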